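(* Let $\mathbb S$ be the free semigroup action on the compact metric space $(X,d)$ generated by continuous maps $g_1,\dots,g_p$. For every $x\in X$, $$\sup_{\omega\in\Sigma_p^+}h_{D\times d}((\omega,x))\le h_d(x)+\log p.$$
   Context: Setting: $G_n^*$ the set of words $\underline g=g_{i_n}\cdots g_{i_1}$, $i_j\in\{1,\dots,p\}$; $d_{\underline g}(x,y)=\max_{0\le j\le n}d(g_{i_j}\cdots g_{i_1}x,g_{i_j}\cdots g_{i_1}y)$; $b_d(K,\underline g,\varepsilon)$ is the minimal cardinality of a $(\underline g,\varepsilon)$-spanning subset $F$ of $K$ (every $x\in K$ has $y\in F$ with $d_{\underline g}(x,y)<\varepsilon$). $B_d(K,\mathbb S,\varepsilon)=\limsup_n\frac1n\log\big(p^{-n}\sum_{\underline g\in G_n^*}b_d(K,\underline g,\varepsilon)\big)$, $h_d(x,\varepsilon)=\inf\{B_d(K,\mathbb S,\varepsilon):K\text{ compact neighbourhood of }x\}$, $h_d(x)=\lim_{\varepsilon\to0^+}h_d(x,\varepsilon)$. Skew product: $\Sigma_p^+=\{1,\dots,p\}^{\mathbb N}$ with metric $D(\omega,\omega')=p^{-\min\{n:\omega_n\ne\omega'_n\}}$, $\mathcal F_G(\omega,x)=(\sigma\omega,g_{\omega_1}(x))$, metric $D\times d=\max(D,d)$ on $\Sigma_p^+\times X$. For $V\subset\Sigma_p^+\times X$ let $B_{D\times d}(V,\mathcal F_G,\varepsilon)=\limsup_n\frac1n\log b_n(V,\varepsilon)$, where $b_n(V,\varepsilon)$ is the minimal cardinality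 of an $(n,\varepsilon)$-spanning set of $V$ for the Bowen metric of $\mathcal F_G$; $h_{D\times d}(z,\varepsilon)=\inf\{B_{D\times d}(V,\mathcal F_G,\varepsilon):V\text{ compact neighbourhood of }z\}$ and $h_{D\times d}(z)=\lim_{\varepsilon\to0^+}h_{D\times d}(z,\varepsilon)$ (the entropy function of $\mathcal F_G$). *)

(* Defs.v *)
From HB Require Import structures.
From mathcomp Require Import all_boot all_order all_algebra.
From mathcomp Require Import all_classical all_reals all_analysis.
Set Implicit Arguments. Unset Strict Implicit. Unset Printing Implicit Defensive.
Import Order.TTheory GRing.Theory Num.Theory.
Local Open Scope classical_set_scope.
Local Open Scope ring_scope.

Section FreeSemigroupEntropy.
Context {R : realType}.

(* A word g_{i_n} ... g_{i_1} is represented by the list [:: i_1; ...; i_n]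
   (i_1 is applied first).  word_orbit g (take j w) x = g_{i_j}...g_{i_1} x. *)
Definition word_orbit (X : Type) (p : nat) (g : 'I_p -> X -> X)
    (w : seq 'I_p) (x : X) : X :=
  foldl (fun y i => g i y) x w.

Definition dword (X : metricType R) (p : nat) (g : 'I_p -> X -> X)
    (w : seq 'I_p) (x y : X) : R :=
  \big[Num.max/0]_(j < (size w).+1)
     mdist (word_orbit g (take j w) x) (word_orbit g (take j w) y).

Definition word_spanning (X : metricType R) (p : nat) (g : 'I_p -> X -> X)
    (K : set X) (w : seq 'I_p) (eps : R) (F : seq X) : Prop :=
  (forall y, y \in F -> K y) /\
  (forall x, K x -> exists y, y \in F /\ dword g w x y < eps).

Definition b_d (X : metricType R) (p : nat) (g : 'I_p -> X -> X)
    (K : set X) (w : seq 'I_p) (eps : R) : R :=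
  inf [set (size F)%:R | F in word_spanning g K w eps].

Definition B_d (X : metricType R) (p : nat) (g : 'I_p -> X -> X)
    (K : set X) (eps : R) : \bar R :=
  limn_esup (fun n : nat =>
    ((n%:R)^-1 * ln ((p%:R ^- n) *
        \sum_(w : n.-tuple 'I_p) b_d g K (tval w) eps))%:E).

Definition h_d_eps (X : metricType R) (p : nat) (g : 'I_p -> X -> X)
    (x : X) (eps : R) : \bar R :=
  ereal_inf [set B_d g K eps | K in [set K : set X | compact K /\ nbhs x K]].

Definition h_d (X : metricType R) (p : nat) (g : 'I_p -> X -> X)
    (x : X) : \bar R :=
  lim (h_d_eps g x eps @[eps --> 0^'+]).

Definition dball (T : Type) (dist : T -> T -> R) (z : T) (e : R) : set T :=
  [set y | dist z y < e].

Definition dopen (T : Type) (dist : T -> T -> R) (U : set T) : Prop :=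
  forall z, U z -> exists2 e, 0 < e & dball dist z e `<=` U.

Definition dcompact (T : Type) (dist : T -> T -> R) (K : set T) : Prop :=
  forall C : set (set T), (forall U, C U -> dopen dist U) ->
    K `<=` \bigcup_(U in C) U ->
    exists s : seq (set T), (forall U, U \in s -> C U) /\
      K `<=` \bigcup_(U in [set U | U \in s]) U.

Definition dnbhs (T : Type) (dist : T -> T -> R) (z : T) (V : set T) : Prop :=
  exists2 e, 0 < e & dball dist z e `<=` V.

(* Sigma_p^+ = {1..p}^N, omega = (omega_1, omega_2, ...) stored as
   omega 0 = omega_1, omega 1 = omega_2, ... *)
Definition Sigma (p : nat) := nat -> 'I_p.

(* D(omega, omega') = p^{- min{n : omega_n <> omega'_n}} (1-based index),
   and 0 when omega = omega'. *)
Definition Dseq (p : nat) (w w' : Sigma p) : R :=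
  match pselect (exists n, w n != w' n) with
  | left h => p%:R ^- (@ex_minn (fun n => w n != w' n) h).+1
  | right _ => 0
  end.

Definition skew_dist (X : metricType R) (p : nat)
    (z z' : Sigma p * X) : R :=
  Num.max (Dseq z.1 z'.1) (mdist z.2 z'.2).

Definition FG (X : Type) (p : nat) (g : 'I_p -> X -> X)
    (z : Sigma p * X) : Sigma p * X :=
  (fun n => z.1 n.+1, g (z.1 0%N) z.2).

Definition bowen (X : metricType R) (p : nat) (g : 'I_p -> X -> X)
    (n : nat) (z z' : Sigma p * X) : R :=
  \big[Num.max/0]_(j < n) skew_dist (iter j (FG g) z) (iter j (FG g) z').

Definition bowen_spanning (X : metricType R) (p : nat) (g : 'I_p -> X -> X)
    (V : set (Sigma p * X)) (n : nat) (eps : R) (F : seq (Sigma p * X)) :=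
  (forall z, z \in F -> V z) /\
  (forall z, V z -> exists z', z' \in F /\ bowen g n z z' < eps).

Definition b_n (X : metricType R) (p : nat) (g : 'I_p -> X -> X)
    (V : set (Sigma p * X)) (n : nat) (eps : R) : R :=
  inf [set (size F)%:R | F in bowen_spanning g V n eps].

Definition B_skew (X : metricType R) (p : nat) (g : 'I_p -> X -> X)
    (V : set (Sigma p * X)) (eps : R) : \bar R :=
  limn_esup (fun n : nat => ((n%:R)^-1 * ln (b_n g V n eps))%:E).

Definition h_skew_eps (X : metricType R) (p : nat) (g : 'I_p -> X -> X)
    (z : Sigma p * X) (eps : R) : \bar R :=
  ereal_inf [set B_skew g V eps |
    V in [set V | dcompact (@skew_dist X p) V /\ dnbhs (@skew_dist X p) z V]].

Definition h_skew (X : metricType R) (p : nat) (g : 'I_p -> X -> X)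
    (z : Sigma p * X) : \bar R :=
  lim (h_skew_eps g z eps @[eps --> 0^'+]).

End FreeSemigroupEntropy.

(* Main.v *)
Require Import Defs.
From HB Require Import structures.
From mathcomp Require Import all_boot all_order all_algebra.
From mathcomp Require Import all_classical all_reals all_analysis.
Import Order.TTheory GRing.Theory Num.Theory.
From mathcomp Require Import zify lra.
Import metricType_numDomainType.
Set Implicit Arguments. Unset Strict Implicit. Unset Printing Implicit Defensive.
Local Open Scope classical_set_scope.
Local Open Scope ring_scope.
Section Helpers.
Context {R : realType}.

Definition minsize (T : Type) (P : seq T -> Prop) : R :=
  inf [set (size F)%:R | F in P].

Lemma minsize_attained (T : Type) (P : seq T -> Prop) :
  (exists F, P F) -> exists F, P F /\ minsize P = (size F)%:R.
Proof.
move=> [F0 PF0].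
have ex : exists n, `[< exists F, P F /\ size F = n >].
  by exists (size F0); apply/asboolP; exists F0.
have := ex_minnP ex => -[m /asboolP [F [PF sF]] mmin].
exists F; split => //; rewrite sF /minsize.
apply/eqP; rewrite eq_le; apply/andP; split.
  apply: ge_inf; last by exists F => //; rewrite sF.
  by exists 0 => _ [G _ <-]; rewrite ler0n.
apply: lb_le_inf; first by exists (size F)%:R, F.
move=> _ [G PG <-]; rewrite ler_nat; apply: mmin.
by apply/asboolP; exists G.
Qed.

Lemma minsize_le (T : Type) (P : seq T -> Prop) F :
  P F -> minsize P <= (size F)%:R.
Proof.
move=> PF; apply: ge_inf; last by exists F.
by exists 0 => _ [G _ <-]; rewrite ler0n.
Qed.

Lemma minsize_ge1 (T : Type) (P : seq T -> Prop) :
  (exists F, P F) -> (forall F, P F -> (0 < size F)%N) -> 1 <= minsize P.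
Proof.
move=> /minsize_attained [F [PF ->]] H.
by rewrite ler1n H.
Qed.

Lemma minsize_mono (T : Type) (P Q : seq T -> Prop) :
  (exists F, P F) -> (forall F, P F -> Q F) -> minsize Q <= minsize P.
Proof.
move=> /minsize_attained [F [PF ->]] H; exact: minsize_le (H _ PF).
Qed.

Lemma bigmax_lt (n : nat) (F : 'I_n -> R) (e : R) :
  0 < e -> (forall i, F i < e) -> \big[Num.max/0]_(i < n) F i < e.
Proof.
move=> e0 H; apply: (big_ind (fun r => r < e)) => //.
by move=> x y xe ye; rewrite gt_max xe ye.
Qed.

Lemma le_bigmax (n : nat) (F : 'I_n -> R) (i : 'I_n) :
  F i <= \big[Num.max/0]_(j < n) F j.
Proof.
by rewrite (bigD1 i) //= le_max lexx.
Qed.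

Lemma bigmax_ge0 (n : nat) (F : 'I_n -> R) :
  0 <= \big[Num.max/0]_(j < n) F j.
Proof.
by apply: (big_rec (fun r => 0 <= r)) => // i x _ x0; rewrite le_max x0 orbT.
Qed.

End Helpers.

Lemma fincover (X : topologicalType) (K : set X) (U : X -> set X) :
  compact K -> (forall y, K y -> nbhs y (U y)) ->
  exists s : seq X, (forall y, y \in s -> K y) /\
    forall z, K z -> exists2 y, y \in s & U y z.
Proof.
move=> cK HU.
pose F := fun (A : set (seq X)) => exists s0 : seq X,
  forall s, {subset s0 <= s} -> A s.
have FF : Filter F.
  split.
  - by exists [::].
  - move=> A B [s1 H1] [s2 H2]; exists (s1 ++ s2) => s sub; split.
      by apply: H1 => y ys; apply: sub; rewrite mem_cat ys.
    by apply: H2 => y ys; apply: sub; rewrite mem_cat ys orbT.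
  - by move=> A B AB [s0 H]; exists s0 => s /H /AB.
have := (proj1 (compact_near_coveringP K) cK) (seq X) F
  (fun s z => exists2 y, (y \in s) && `[< K y >] & U y z) FF.
case.
  move=> x Kx; exists (U x, [set s | x \in s]); first split.
  - exact: HU.
  - by exists [:: x] => s /(_ x); rewrite mem_seq1 eqxx => /(_ isT).
  - by case=> z s /= [Uz xs]; exists x => //; rewrite xs; apply/asboolP.
move=> s0 Hs0; have := Hs0 s0 (fun _ h => h) => cov.
exists [seq y <- s0 | `[< K y >]]; split.
  by move=> y; rewrite mem_filter => /andP [/asboolP].
move=> z Kz; have [y /andP [ys Ky] Uyz] := cov z Kz.
by exists y => //; rewrite mem_filter Ky.
Qed.

Section LimsupHelp.
Context {R : realType}.
Local Open Scope ereal_scope.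

Lemma limn_esup_le_shift (u v : (\bar R)^nat) (c : R) :
  (\forall n \near \oo, u n <= v n + c%:E) ->
  limn_esup u <= limn_esup v + c%:E.
Proof.
move=> [N _ HN].
rewrite /limn_esup /limf_esup -leeBlDr //.
apply: le_ereal_inf_tmp => _ [A FA <-].
rewrite leeBlDr //.
have FA' : \oo (A `&` [set n | (N <= n)%N]).
  by apply: filterI => //; exists N.
apply: (@le_trans _ _ (ereal_sup (u @` (A `&` [set n | (N <= n)%N])))).
  by apply: ereal_inf_lbound; exists (A `&` [set n | (N <= n)%N]).
apply: ge_ereal_sup => _ [n [An Nn] <-].
apply: (le_trans (HN n Nn)); rewrite leeD2r //.
by apply: ereal_sup_ubound; exists n.
Qed.

Lemma limn_esup_le (u v : (\bar R)^nat) :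
  (forall n, u n <= v n) -> limn_esup u <= limn_esup v.
Proof.
move=> H; rewrite -[limn_esup v]adde0; apply: limn_esup_le_shift.
by apply: nearW => n; rewrite adde0.
Qed.

End LimsupHelp.

Section XSide.
Context {R : realType} {p : nat} {X : metricType R} (g : 'I_p -> X -> X).
Hypothesis gc : forall i, continuous (g i).
Hypothesis p0 : (0 < p)%N.

Lemma word_orbit_rcons w i x :
  word_orbit g (rcons w i) x = g i (word_orbit g w x).
Proof. by rewrite /word_orbit foldl_rcons. Qed.

Lemma word_orbit_cont w : continuous (word_orbit g w).
Proof.
elim/last_ind: w => [|w i IH] x.
  exact: cvg_id.
have -> : word_orbit g (rcons w i) = g i \o word_orbit g w.
  by apply: funext => y; rewrite word_orbit_rcons.
by apply: continuous_comp; [exact: IH | exact: gc].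
Qed.

Lemma near_dist (f : X -> X) y (e : R) : continuous f -> 0 < e ->
  \forall x \near y, mdist (f x) (f y) < e.
Proof.
move=> fc e0; near=> x; rewrite metric_sym; near: x.
exact: (cvgr_dist_lt (fc y) e0).
Unshelve. all: by end_near. Qed.

Lemma dword_nbhs w y (e : R) : 0 < e ->
  nbhs y [set x | dword g w x y < e].
Proof.
move=> e0.
have : \forall x \near y, forall j : 'I_(size w).+1,
    mdist (word_orbit g (take j w) x) (word_orbit g (take j w) y) < e.
  apply: filter_forall => j; have := @near_dist (word_orbit g (take j w)) y e (@word_orbit_cont (take j w)) e0; exact.
apply: filterS => x H; exact: bigmax_lt.
Qed.

Lemma word_span_exists (K : set X) w (e : R) : compact K -> 0 < e ->
  exists F, word_spanning g K w e F.
Proof.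
move=> cK e0.
have [s [sK cov]] := @fincover X K (fun y => [set x | dword g w x y < e]) cK
  (fun y _ => @dword_nbhs w y e e0).
exists s; split => // x Kx; have [y ys H] := cov x Kx.
by exists y.
Qed.

Lemma b_dE (K : set X) w e :
  b_d g K w e = minsize (word_spanning g K w e).
Proof. by []. Qed.

Lemma b_d_ge1 (K : set X) w e x : compact K -> 0 < e -> K x ->
  1 <= b_d g K w e.
Proof.
move=> cK e0 Kx; rewrite b_dE; apply: minsize_ge1.
  exact: word_span_exists.
move=> F [_ /(_ x Kx) [y [yF _]]]; by case: F yF.
Qed.

Lemma b_d_mono (K : set X) w e1 e2 : compact K -> 0 < e1 -> e1 <= e2 ->
  b_d g K w e2 <= b_d g K w e1.
Proof.
move=> cK e10 e12; rewrite !b_dE; apply: minsize_mono.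
  exact: word_span_exists.
move=> F [FK H]; split => // x Kx; have [y [yF d]] := H x Kx.
by exists y; split => //; apply: lt_le_trans e12.
Qed.

Lemma sum_tuple_gt0 n (f : n.-tuple 'I_p -> R) :
  (forall w, 1 <= f w) -> 0 < \sum_(w : n.-tuple 'I_p) f w.
Proof.
move=> H; apply: (@lt_le_trans _ _ (\sum_(w : n.-tuple 'I_p) (1 : R))).
  by rewrite sumr_const card_tuple card_ord ltr0n expn_gt0 p0.
by apply: ler_sum => w _; apply: H.
Qed.

Lemma B_d_mono (K : set X) x e1 e2 : compact K -> K x -> 0 < e1 -> e1 <= e2 ->
  (B_d g K e2 <= B_d g K e1)%E.
Proof.
move=> cK Kx e10 e12; apply: limn_esup_le => n; rewrite lee_fin.
apply: ler_wpM2l; first by rewrite invr_ge0 ler0n.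
have pn : 0 < (p%:R : R) ^- n by rewrite invr_gt0 exprn_gt0 // ltr0n.
have e20 : 0 < e2 by apply: lt_le_trans e12.
rewrite ler_ln ?posrE; first last.
- by rewrite mulr_gt0 // sum_tuple_gt0 // => w; exact: (b_d_ge1 _ cK e10 Kx).
- by rewrite mulr_gt0 // sum_tuple_gt0 // => w; exact: (b_d_ge1 _ cK e20 Kx).
rewrite ler_pM2l //; apply: ler_sum => w _; exact: b_d_mono.
Qed.

Lemma h_d_eps_mono x e1 e2 : 0 < e1 -> e1 <= e2 ->
  (h_d_eps g x e2 <= h_d_eps g x e1)%E.
Proof.
move=> e10 e12; apply: le_ereal_inf_tmp => _ [K [cK nK] <-].
apply: (@le_trans _ _ (B_d g K e2)).
  by apply: ereal_inf_lbound; exists K.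
exact: B_d_mono cK (nbhs_singleton nK) e10 e12.
Qed.

Lemma h_dE x : h_d g x =
  ereal_sup [set h_d_eps g x e | e in [set` Interval (BRight (0:R)) (BInfty R false)]].
Proof.
apply: (cvg_lim (@ereal_hausdorff R)).
apply: nonincreasing_at_right_cvge => //.
move=> a b; rewrite !in_itv /= !andbT => a0 b0 ab; exact: h_d_eps_mono.
Qed.

End XSide.

Section DseqLemmas.
Context {R : realType} {p : nat}.
Hypothesis p0 : (0 < p)%N.
Local Notation D := (@Dseq R p).

Lemma pR_gt0 : 0 < (p%:R : R). Proof. by rewrite ltr0n. Qed.

Lemma pXV_gt0 n : 0 < (p%:R : R) ^- n.
Proof. by rewrite invr_gt0 exprn_gt0 // pR_gt0. Qed.

Lemma Dseq_ge (a b : Sigma p) i m : a i != b i -> (i <= m)%N ->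
  (p%:R : R) ^- m.+1 <= D a b.
Proof.
move=> abi im; rewrite /Dseq; case: pselect => [h|h]; last first.
  by exfalso; apply: h; exists i.
case: ex_minnP => k _ kmin; have ki := kmin i abi.
rewrite lef_pV2 ?posrE ?exprn_gt0 ?pR_gt0 //.
by apply: ler_weXn2l; [rewrite ler1n | rewrite ltnS (leq_trans ki)].
Qed.

Lemma Dseq_cases (a b : Sigma p) :
  (D a b = 0 /\ forall n, a n = b n) \/
  exists m, [/\ a m != b m, (forall i, (i < m)%N -> a i = b i) &
     D a b = (p%:R : R) ^- m.+1].
Proof.
rewrite /Dseq; case: pselect => h.
  right; case: ex_minnP => m abm mmin; exists m; split => // i im.
  case: (eqVneq (a i) (b i)) => // abi.
  by have := mmin i abi; rewrite leqNgt im.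
left; split => // n; case: (eqVneq (a n) (b n)) => // abn.
by exfalso; apply: h; exists n.
Qed.

Lemma Dseq_ge0 (a b : Sigma p) : 0 <= D a b.
Proof.
by rewrite /Dseq; case: pselect => // h; apply: ltW; apply: pXV_gt0.
Qed.

Lemma Dseq_xx (a : Sigma p) : D a a = 0.
Proof. by rewrite /Dseq; case: pselect => // h; exfalso; case: h => n; rewrite eqxx. Qed.

Lemma Dseq_sym (a b : Sigma p) : D a b = D b a.
Proof.
rewrite /Dseq; case: pselect => h1; case: pselect => h2 //.
- congr (_ ^- _.+1); case: ex_minnP => k1 ab1 min1; case: ex_minnP => k2 ab2 min2.
  apply/eqP; rewrite eqn_leq min1 ?min2 //; first by rewrite eq_sym.
  by rewrite eq_sym.
- by exfalso; apply: h2; case: h1 => n abn; exists n; rewrite eq_sym.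
- by exfalso; apply: h1; case: h2 => n abn; exists n; rewrite eq_sym.
Qed.

Lemma Dseq_tri (a b c : Sigma p) : D a c <= Num.max (D a b) (D b c).
Proof.
have [[-> _]|[m [acm _ ->]]] := Dseq_cases a c; first by rewrite le_max Dseq_ge0.
case: (eqVneq (a m) (b m)) => [abm|abm].
  by rewrite le_max; apply/orP; right; apply: (Dseq_ge _ (leqnn m)); rewrite -abm.
by rewrite le_max; apply/orP; left; apply: (Dseq_ge abm (leqnn m)).
Qed.

Lemma ord_p1 : p = 1%N -> forall u v : 'I_p, u = v.
Proof.
move=> p1 u v; apply: val_inj => /=.
have := ltn_ord u; have := ltn_ord v; move: (nat_of_ord u) (nat_of_ord v).
by rewrite p1 => -[|?] [|?].
Qed.

Lemma Dseq_agree (e : R) : 0 < e -> exists k, forall a b : Sigma p,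
  (forall i, (i < k)%N -> a i = b i) -> D a b < e.
Proof.
move=> e0; have [p1|p2] := leqP p 1.
  have p1' : p = 1%N by apply/eqP; rewrite eqn_leq p1 p0.
  exists 0%N => a b _; rewrite /Dseq; case: pselect => // h; exfalso.
  by case: h => n; rewrite (ord_p1 p1' (a n) (b n)) eqxx.
exists (Num.Def.trunc e^-1) => a b agr; rewrite /Dseq; case: pselect => // h.
case: ex_minnP => m abm _.
have km : (Num.Def.trunc e^-1 <= m)%N.
  rewrite leqNgt; apply/negP => /agr; by apply/eqP.
rewrite -[e]invrK ltf_pV2 ?posrE ?invr_gt0 ?exprn_gt0 ?pR_gt0 //.
apply: (lt_le_trans (truncnS_gt _)).
rewrite -natrX ler_nat; apply: leq_trans (ltnW (ltn_expl _ p2)).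
by rewrite ltnS.
Qed.

Lemma Dseq_first (a b : Sigma p) : D a b < (p%:R)^-1 -> a 0%N = b 0%N.
Proof.
move=> H; apply/eqP; apply: contraLR H => ab.
by have := Dseq_ge ab (leqnn 0); rewrite expr1 -leNgt.
Qed.

Lemma Dseq_shift (a b : Sigma p) : a 0%N = b 0%N ->
  D (fun n => a n.+1) (fun n => b n.+1) <= p%:R * D a b.
Proof.
move=> ab0.
have [[-> _]|[m [abm _ ->]]] := Dseq_cases (fun n => a n.+1) (fun n => b n.+1).
  by rewrite mulr_ge0 ?ler0n ?Dseq_ge0.
have H := Dseq_ge abm (leqnn m.+1).
apply: le_trans (ler_wpM2l (ler0n _ _) H).
by rewrite [X in _ <= _ / X]exprS invfM mulrA divff ?mul1r // pnatr_eq0 -lt0n.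
Qed.

Context {X : metricType R}.
Local Notation skew := (@skew_dist R X p).

Lemma skew_ge0 z z' : 0 <= skew z z'.
Proof. by rewrite /skew_dist le_max Dseq_ge0. Qed.

Lemma skew_sym z z' : skew z z' = skew z' z.
Proof. by rewrite /skew_dist Dseq_sym metric_sym. Qed.

Lemma skew_xx z : skew z z = 0.
Proof. by rewrite /skew_dist Dseq_xx mdistxx maxxx. Qed.

Lemma skew_ltP z z' e : (skew z z' < e) <-> (Dseq z.1 z'.1 < e /\ mdist z.2 z'.2 < e).
Proof. by rewrite /skew_dist gt_max; split => [/andP|[-> ->]]. Qed.

Lemma skew_tri z1 z2 z3 : skew z1 z3 <= skew z1 z2 + skew z2 z3.
Proof.
rewrite {1}/skew_dist ge_max; apply/andP; split.
  apply: (le_trans (@Dseq_tri _ z2.1 _)); rewrite ge_max; apply/andP; split.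
    by apply: ler_wpDr; [exact: skew_ge0 | rewrite le_max lexx].
  by apply: ler_wpDl; [exact: skew_ge0 | rewrite le_max lexx].
apply: (le_trans (metric_triangle _ z2.2 _)); apply: lerD;
  by rewrite le_max lexx orbT.
Qed.

Definition dint (U : set (Sigma p * X)) : set (Sigma p * X) :=
  [set z | exists2 e, 0 < e & dball skew z e `<=` U].

Lemma dint_dopen U : dopen skew (dint U).
Proof.
move=> z [e e0 H]; exists e => // w zw.
exists (e - skew z w); first by rewrite subr_gt0.
move=> v wv; apply: H; rewrite /dball /=.
apply: (le_lt_trans (skew_tri z w v)).
by rewrite -ltrBrDl.
Qed.

Lemma dint_sub U : dint U `<=` U.
Proof. by move=> z [e e0]; apply; rewrite /dball /= skew_xx. Qed.

Variable g : 'I_p -> X -> X.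
Hypothesis gc : forall i, continuous (g i).

Lemma FG_cont z (e : R) : 0 < e -> exists2 d, 0 < d &
  forall z', skew z z' < d -> skew (FG g z) (FG g z') < e.
Proof.
case: z => a x e0.
have H0 := near_dist x (@gc (a 0%N)) e0.
case/nbhs_mdistP: H0 => d1 /= d10 H1.
exists (Num.min (Num.min d1 (p%:R^-1)) (e / p%:R)).
  by rewrite !lt_min d10 invr_gt0 divr_gt0 // pR_gt0.
case=> b y /skew_ltP [/= Dab dxy].
move: Dab dxy; rewrite !lt_min => /andP [/andP [_ Dp] De] /andP [/andP [dxy _] _].
have ab0 := Dseq_first Dp.
apply/skew_ltP => /=; split.
  apply: (le_lt_trans (Dseq_shift ab0)).
  by rewrite -ltr_pdivlMl ?pR_gt0 // mulrC.
by rewrite -ab0 metric_sym; apply: H1.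
Qed.

Lemma iter_FG_cont j z (e : R) : 0 < e -> exists2 d, 0 < d &
  forall z', skew z z' < d ->
    skew (iter j (FG g) z) (iter j (FG g) z') < e.
Proof.
elim: j e => [|j IH] e e0; first by exists e.
have [d1 d10 H1] := FG_cont (iter j (FG g) z) e0.
have [d d0 H] := IH d1 d10.
by exists d => // z' /H /H1.
Qed.

Lemma bowen_nbhs n z (e : R) : 0 < e -> exists2 d, 0 < d &
  forall z', skew z z' < d -> bowen g n z' z < e.
Proof.
move=> e0.
suff [d d0 H] : exists2 d, 0 < d & forall z', skew z z' < d ->
    forall j, (j < n)%N -> skew (iter j (FG g) z') (iter j (FG g) z) < e.
  exists d => // z' /H Hz; apply: bigmax_lt => // j; exact: Hz.
elim: n => [|n [d1 d10 H1]]; first by exists 1.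
have [d2 d20 H2] := iter_FG_cont n z e0.
exists (Num.min d1 d2); first by rewrite lt_min d10 d20.
move=> z'; rewrite lt_min => /andP [z1 z2] j; rewrite ltnS leq_eqVlt.
case/orP => [/eqP -> | jn]; last exact: H1.
by rewrite skew_sym; apply: H2.
Qed.

Lemma bowen_span_exists (V : set (Sigma p * X)) n (e : R) :
  dcompact skew V -> 0 < e -> exists F, bowen_spanning g V n e F.
Proof.
move=> cV e0.
have [[z0 Vz0]|V0] := pselect (exists z, V z); last first.
  by exists [::]; split => // z Vz; exfalso; apply: V0; exists z.
pose B z := [set z' | bowen g n z' z < e].
pose C := [set U | exists z, V z /\ U = dint (B z)].
have [] := cV C.
- by move=> U [z [_ ->]]; apply: dint_dopen.
- move=> z Vz; exists (dint (B z)); first by exists z.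
  have [d d0 H] := bowen_nbhs n z e0.
  exists d => // z' zz'; exact: H.
move=> s [sC cov].
pose center U := if pselect (exists z, V z /\ U = dint (B z)) is left h
  then projT1 (cid h) else z0.
have centerP U : C U -> V (center U) /\ U = dint (B (center U)).
  move=> CU; rewrite /center; case: pselect => // h.
  by case: (cid h).
exists (map center s); split.
  by move=> z /mapP [U Us ->]; case: (centerP U (sC U Us)).
move=> z Vz; have [U Us Uz] := cov z Vz.
have [_ UE] := centerP U (sC U Us).
exists (center U); split; first exact: map_f.
by move: Uz; rewrite {1}UE => /dint_sub.
Qed.

End DseqLemmas.

Section SkewEntropy.
Context {R : realType} {p : nat} {X : metricType R} (g : 'I_p -> X -> X).
Hypothesis p0 : (0 < p)%N.
Hypothesis gc : forall i, continuous (g i).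
Local Notation skew := (@skew_dist R X p).

Lemma b_nE V n e : b_n g V n e = minsize (bowen_spanning g V n e).
Proof. by []. Qed.

Lemma b_n_ge1 V n e z : dcompact skew V -> 0 < e -> V z -> 1 <= b_n g V n e.
Proof.
move=> cV e0 Vz; rewrite b_nE; apply: minsize_ge1.
  exact: bowen_span_exists.
by move=> F [_ /(_ z Vz) [y [yF _]]]; case: F yF.
Qed.

Lemma b_n_mono V n e1 e2 : dcompact skew V -> 0 < e1 -> e1 <= e2 ->
  b_n g V n e2 <= b_n g V n e1.
Proof.
move=> cV e10 e12; rewrite !b_nE; apply: minsize_mono.
  exact: bowen_span_exists.
move=> F [FV H]; split => // x Vx; have [y [yF d]] := H x Vx.
by exists y; split => //; apply: lt_le_trans e12.
Qed.

Lemma B_skew_mono V z e1 e2 : dcompact skew V -> V z -> 0 < e1 -> e1 <= e2 ->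
  (B_skew g V e2 <= B_skew g V e1)%E.
Proof.
move=> cV Vz e10 e12; apply: limn_esup_le => n; rewrite lee_fin.
apply: ler_wpM2l; first by rewrite invr_ge0 ler0n.
have e20 : 0 < e2 by apply: lt_le_trans e12.
rewrite ler_ln ?posrE; first exact: b_n_mono.
  by apply: (lt_le_trans ltr01); apply: b_n_ge1 cV e20 Vz.
by apply: (lt_le_trans ltr01); apply: b_n_ge1 cV e10 Vz.
Qed.

Lemma dnbhs_center z V : Defs.dnbhs skew z V -> V z.
Proof. by move=> [e e0 H]; apply: H; rewrite /dball /= skew_xx. Qed.

Lemma h_skew_eps_mono z e1 e2 : 0 < e1 -> e1 <= e2 ->
  (h_skew_eps g z e2 <= h_skew_eps g z e1)%E.
Proof.
move=> e10 e12; apply: le_ereal_inf_tmp => _ [V [cV nV] <-].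
apply: (@le_trans _ _ (B_skew g V e2)).
  by apply: ereal_inf_lbound; exists V.
exact: B_skew_mono cV (dnbhs_center nV) e10 e12.
Qed.

Lemma h_skewE z : h_skew g z =
  ereal_sup [set h_skew_eps g z e | e in [set` Interval (BRight (0:R)) (BInfty R false)]].
Proof.
apply: (cvg_lim (@ereal_hausdorff R)).
apply: nonincreasing_at_right_cvge => //.
move=> a b; rewrite !in_itv /= !andbT => a0 b0 ab; exact: h_skew_eps_mono.
Qed.

End SkewEntropy.

Section ProdCompact.
Context {R : realType} {p : nat} {X : metricType R}.
Hypothesis p0 : (0 < p)%N.
Local Notation skew := (@skew_dist R X p).

Lemma prod_dnbhs (K : set X) z : nbhs z.2 K -> Defs.dnbhs skew z [set z' | K z'.2].
Proof.
case/nbhs_mdistP => e /= e0 H; exists e => // z' /skew_ltP [_ d].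
exact: H.
Qed.

Let i0 : 'I_p := Ordinal p0.

Let cyl (u : seq 'I_p) : set (Sigma p) :=
  [set a | forall i, (i < size u)%N -> a i = nth i0 u i].

Lemma prod_dcompact (K : set X) : compact K -> dcompact skew [set z | K z.2].
Proof.
move=> cK C Copen cov.
pose good u := exists s : seq (set (Sigma p * X)), (forall U, U \in s -> C U) /\
  [set z | cyl u z.1 /\ K z.2] `<=` \bigcup_(U in [set U | U \in s]) U.
suff [s [sC H]] : good [::].
  by exists s; split => // z Kz; apply: H; split.
have stepA u : (forall a, good (rcons u a)) -> good u.
  move=> H; case: (choice H) => f Hf.
  exists (flatten [seq f a | a <- enum 'I_p]); split.
    by move=> U /flatten_mapP [a _ Ua]; exact: (proj1 (Hf a)) U Ua.
  move=> [a' y] [cu Ky]; have [] := proj2 (Hf (a' (size u))) (a', y).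
    split => //= i; rewrite size_rcons ltnS leq_eqVlt => /orP [/eqP -> | iu].
      by rewrite nth_rcons ltnn eqxx.
    by rewrite nth_rcons iu; apply: cu.
  move=> U Us Uz; exists U => //=; apply/flatten_mapP.
  by exists (a' (size u)); first by rewrite mem_enum.
apply: contrapT => bad0.
pose next (u : seq 'I_p) : 'I_p :=
  if pselect (exists a, ~ good (rcons u a)) is left h then projT1 (cid h) else i0.
have nextP u : ~ good u -> ~ good (rcons u (next u)).
  move=> bu; rewrite /next; case: pselect => [h|h].
    by case: (cid h).
  exfalso; apply: bu; apply: stepA => a; apply: contrapT => ga; apply: h.
  by exists a.
pose us := fix us (k : nat) : seq 'I_p :=
  if k is k'.+1 then rcons (us k') (next (us k')) else [::].
have usS k : us k.+1 = rcons (us k) (next (us k)) by [].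
have usbad k : ~ good (us k).
  by elim: k => // k IH; rewrite usS; exact: nextP.
have ussize k : size (us k) = k.
  by elim: k => // k IH; rewrite usS size_rcons IH.
pose om : Sigma p := fun i => next (us i).
have usnth k i : (i < k)%N -> nth i0 (us k) i = om i.
  elim: k => // k IH; rewrite ltnS leq_eqVlt usS nth_rcons ussize.
  case/orP => [/eqP -> | ik]; first by rewrite ltnn eqxx.
  by rewrite ik IH.
have : forall y, exists Ue : set (Sigma p * X) * R, K y ->
    [/\ C Ue.1, 0 < Ue.2 & dball skew (om, y) Ue.2 `<=` Ue.1].
  move=> y; case: (pselect (K y)) => Ky; last by exists (set0, 0).
  have [U CU Uz] := cov (om, y) Ky.
  have [e e0 He] := Copen U CU (om, y) Uz.
  by exists (U, e).
case/choice => Ue HUe.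
have [t [tK tcov]] := @fincover X K (fun y => [set y' | mdist y y' < (Ue y).2]) cK
  (fun y Ky => ltac:(apply/nbhs_mdistP; exists (Ue y).2 => //;
                     by case: (HUe y Ky))).
have : forall y, exists k, K y -> forall a b : Sigma p,
    (forall i, (i < k)%N -> a i = b i) -> Dseq a b < (Ue y).2.
  move=> y; case: (pselect (K y)) => Ky; last by exists 0%N.
  have [_ e0 _] := HUe y Ky; have [k Hk] := Dseq_agree p0 e0.
  by exists k.
case/choice => kf Hkf.
pose k := \max_(y <- t) kf y.
apply: (usbad k); exists (map (fun y => (Ue y).1) t); split.
  by move=> U /mapP [y yt ->]; case: (HUe y (tK y yt)).
move=> [a y'] [/= cyla Ky']; have [y yt dyy'] := tcov y' Ky'.
have [CU e0 Hb] := HUe y (tK y yt).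
exists (Ue y).1; first by rewrite /= (map_f (fun y => (Ue y).1) yt).
apply: Hb; rewrite /dball /=; apply/skew_ltP; split => //=.
apply: (Hkf y (tK y yt)) => i ik.
have ik' : (i < k)%N.
  by apply: (leq_trans ik); apply: (@leq_bigmax_seq _ t xpredT kf y yt).
by rewrite -(usnth k i ik') (cyla i) // ussize.
Qed.

End ProdCompact.

Lemma size_flatten_map (A B : Type) (f : A -> seq B) (s : seq A) :
  size (flatten [seq f x | x <- s]) = (\sum_(x <- s) size (f x))%N.
Proof.
elim: s => [|x s IH]; first by rewrite big_nil.
by rewrite /= size_cat IH big_cons.
Qed.

Lemma take_mkseq (T : Type) (f : nat -> T) j n : (j <= n)%N ->
  take j (mkseq f n) = mkseq f j.
Proof.
by move=> jn; rewrite /mkseq -map_take take_iota (minn_idPl jn).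
Qed.

Section Counting.
Context {R : realType} {p : nat} {X : metricType R} (g : 'I_p -> X -> X).
Hypothesis p0 : (0 < p)%N.
Hypothesis gc : forall i, continuous (g i).
Local Notation skew := (@skew_dist R X p).

Lemma iterFG j (a : Sigma p) x :
  iter j (FG g) (a, x) = ((fun i => a (j + i)%N), word_orbit g (mkseq a j) x).
Proof.
elim: j => [|j IH]; first by congr pair; apply: funext => i.
rewrite iterS IH /FG; congr pair.
  by apply: funext => i /=; rewrite addnS addSn.
by rewrite mkseqS word_orbit_rcons /= addn0.
Qed.

Let i0 : 'I_p := Ordinal p0.
Let ext (u : seq 'I_p) : Sigma p := fun i => nth i0 u i.

Lemma ext_eq (a : Sigma p) n k m : (m < n + k)%N ->
  ext (mkseq a n ++ mkseq (fun i => a (n + i)%N) k) m = a m.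
Proof.
move=> mnk; rewrite /ext nth_cat size_mkseq; case: ifP => mn.
  by rewrite nth_mkseq.
rewrite nth_mkseq; first by congr a; lia.
move/negbT: mn; rewrite -leqNgt => nm; lia.
Qed.

Lemma count_bound (K : set X) (e : R) k n : compact K -> 0 < e ->
  (forall a b : Sigma p, (forall i, (i < k)%N -> a i = b i) -> Dseq a b < e) ->
  b_n g [set z | K z.2] n e <=
    (p%:R) ^+ k * \sum_(w : n.-tuple 'I_p) b_d g K w e.
Proof.
move=> cK e0 Hk.
have : forall w : seq 'I_p, exists F, word_spanning g K w e F /\
    b_d g K w e = (size F)%:R.
  move=> w; apply: minsize_attained; exact: word_span_exists.
case/choice => Fw HFw.
pose F := flatten [seq flatten [seq [seq (ext (tval w ++ tval v), y) | y <- Fw (tval w)]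
   | v <- index_enum (k.-tuple 'I_p)] | w <- index_enum (n.-tuple 'I_p)].
have FE : (size F)%:R = (p%:R) ^+ k * \sum_(w : n.-tuple 'I_p) b_d g K w e.
  rewrite size_flatten_map natr_sum mulr_sumr; apply: eq_bigr => w _.
  rewrite size_flatten_map natr_sum.
  under eq_bigr do rewrite size_map.
  rewrite sumr_const card_tuple card_ord (proj2 (HFw w)).
  by rewrite -[X in X = _]mulr_natr natrX mulrC.
rewrite -FE b_nE; apply: minsize_le; split.
  move=> z /flatten_mapP [w _ /flatten_mapP [v _ /mapP [y yF ->]]].
  exact: (proj1 (proj1 (HFw w)) y yF).
case=> a x' /= Kx'.
pose w : n.-tuple 'I_p := @Tuple n _ (mkseq a n) (introT eqP (size_mkseq a n)).
pose v : k.-tuple 'I_p :=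
  @Tuple k _ (mkseq (fun i => a (n + i)%N) k) (introT eqP (size_mkseq _ k)).
have [y [yF dy]] := proj2 (proj1 (HFw w)) x' Kx'.
exists (ext (tval w ++ tval v), y); split.
  apply/flatten_mapP; exists w; first exact: mem_index_enum.
  apply/flatten_mapP; exists v; first exact: mem_index_enum.
  exact: (map_f (fun y => (ext (tval w ++ tval v), y)) yF).
apply: bigmax_lt => // j.
rewrite !iterFG; apply/skew_ltP; split => /=.
  apply: Hk => i ik; rewrite ext_eq //.
  have := ltn_ord j; lia.
have -> : mkseq (ext (tval w ++ tval v)) j = mkseq a j.
  apply/eq_in_map => i; rewrite mem_iota add0n => /andP [_ ij].
  rewrite ext_eq //; have := ltn_ord j; lia.
have jn : (j < (size (tval w)).+1)%N.
  by rewrite size_mkseq ltnS ltnW.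
apply: le_lt_trans dy.
have := le_bigmax (fun i : 'I_(size (tval w)).+1 =>
   mdist (word_orbit g (take i (tval w)) x') (word_orbit g (take i (tval w)) y))
   (Ordinal jn).
by rewrite /= take_mkseq // ltnW.
Qed.

End Counting.

Section Final.
Context {R : realType} {p : nat} {X : metricType R} (g : 'I_p -> X -> X).
Hypothesis p0 : (0 < p)%N.
Hypothesis gc : forall i, continuous (g i).

Lemma B_skew_le (K : set X) x e : compact K -> K x -> 0 < e ->
  (B_skew g [set z | K z.2] e <= B_d g K e + (ln (p%:R : R))%:E)%E.
Proof.
move=> cK Kx e0.
have [k Hk] := Dseq_agree p0 e0.
apply/lee_addgt0Pr => del del0.
rewrite -addeA -EFinD.
apply: limn_esup_le_shift.
exists (Num.Def.trunc (k%:R * ln (p%:R : R) / del)).+1 => // n /= Nn.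
rewrite -EFinD lee_fin.
set b := b_n g _ n e.
set S := \sum_(w : n.-tuple 'I_p) b_d g K w e.
have pR0 : 0 < (p%:R : R) by rewrite ltr0n.
have S0 : 0 < S.
  apply: sum_tuple_gt0 => // w; exact: b_d_ge1 cK e0 Kx.
have b1 : 1 <= b.
  apply: (@b_n_ge1 R p X g p0 gc _ n e (fun _ => Ordinal p0, x)) => //.
  exact: prod_dcompact.
have bS : b <= p%:R ^+ k * S by apply: count_bound.
have pk0 : 0 < (p%:R : R) ^+ k by rewrite exprn_gt0.
have H1 : ln b <= ln S + k%:R * ln (p%:R : R).
  apply: (@le_trans _ _ (ln ((p%:R : R) ^+ k * S))).
    by rewrite ler_ln ?posrE // ?mulr_gt0 // (lt_le_trans ltr01 b1).
  by rewrite lnM ?posrE // lnXn // addrC mulr_natl.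
have n0 : 0 < (n%:R : R).
  by rewrite ltr0n (leq_trans _ Nn).
have H2 : k%:R * ln (p%:R : R) <= n%:R * del.
  have := truncnS_gt (k%:R * ln (p%:R : R) / del).
  move=> /lt_le_trans /(_ (_ : _ <= (n%:R : R))).
  rewrite ler_nat => /(_ Nn); rewrite ltr_pdivrMr // => /ltW.
  by rewrite mulrC.
have H3 : ln ((p%:R : R) ^- n * S) = ln S - n%:R * ln (p%:R : R).
  rewrite lnM ?posrE ?invr_gt0 ?exprn_gt0 // lnV ?posrE ?exprn_gt0 //.
  by rewrite lnXn // addrC mulr_natl.
rewrite H3 -[X in _ <= _ + X](mulKf (lt0r_neq0 n0)) -mulrDr.
apply: ler_wpM2l; first by rewrite invr_ge0 ltW.
rewrite mulrDr; lra.
Qed.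

End Final.

Unset Implicit Arguments.

Theorem mainTheorem9 (R : realType) (p : nat) (X : metricType R)
    (g : 'I_p -> X -> X) :
  (0 < p)%N ->
  compact [set: X] ->
  (forall i, continuous (g i)) ->
  forall x : X,
    (ereal_sup [set h_skew g (omega, x) | omega in [set: Sigma p]]
      <= h_d g x + (ln (p%:R : R))%:E)%E.
Proof.
move=> p0 _ gc x.
apply: ge_ereal_sup => _ [om _ <-].
rewrite h_skewE // h_dE //.
apply: ge_ereal_sup => _ [e /= e0' <-].
have e0 : 0 < e by move: e0'; rewrite in_itv /= andbT.
apply: (@le_trans _ _ (h_d_eps g x e + (ln (p%:R : R))%:E)%E); last first.
  by rewrite leeD2r //; apply: ereal_sup_ubound; exists e.
rewrite -leeBlDr //; apply: le_ereal_inf_tmp => _ [K [cK nK] <-].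
rewrite leeBlDr //.
apply: le_trans (B_skew_le p0 gc cK (nbhs_singleton nK) e0).
apply: ereal_inf_lbound; exists [set z | K z.2] => //; split.
  exact: prod_dcompact.
exact: prod_dnbhs.
Qed.
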